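(* Let $n$ be a positive integer and let $G$ be a symmetric pure $(2n)$-sparse gapset of genus $3n+1$ with multiplicity $m$. Then $m+1\in G$.
   Context: A gapset is a finite set $G\subset\mathbb{N}=\{1,2,\dots\}$ such that whenever $z\in G$ and $z=x+y$ with $x,y\in\mathbb{N}$, then $x\in G$ or $y\in G$; its genus is $g=\#G$. Writing $G=\{\ell_1<\dots<\ell_g\}$, multiplicity $m(G)=\min\{s\in\mathbb{N}:s\notin G\}$, Frobenius number $F(G)=\ell_g$; $G$ is symmetric if $F(G)=2g-1$. $G$ is pure $\kappa$-sparse if $\ell_{i+1}-\ell_i\le\kappa$ for all $i$ with equality for some $i$. *)

(* Defs.v *)
From mathcomp Require Import all_boot.
Set Implicit Arguments. Unset Strict Implicit. Unset Printing Implicit Defensive.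

(* A finite set G of positive integers is represented by a sequence of nats
   (duplicates and order irrelevant; only membership matters). *)

Definition is_gapset (G : seq nat) : Prop :=
  (forall z, z \in G -> 0 < z) /\
  (forall x y, 0 < x -> 0 < y -> x + y \in G -> (x \in G) || (y \in G)).

Definition gapseq (G : seq nat) : seq nat := sort leq (undup G).

Definition genus (G : seq nat) : nat := size (undup G).

Definition multiplicity (G : seq nat) : nat :=
  head 0 [seq s <- iota 1 (size (undup G)).+1 | s \notin G].

(* Frobenius number F(G) = l_g (largest element; 0 if G is empty) *)
Definition frobenius (G : seq nat) : nat := \max_(x <- G) x.

Definition symmetric_gapset (G : seq nat) : Prop := frobenius G = 2 * genus G - 1.

Definition pure_sparse (kappa : nat) (G : seq nat) : Prop :=
  let l := gapseq G in
  (forall i, i.+1 < size l -> nth 0 l i.+1 - nth 0 l i <= kappa) /\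
  (exists i, i.+1 < size l /\ nth 0 l i.+1 - nth 0 l i = kappa).

(* Main.v *)
Require Import Defs.
From mathcomp Require Import all_boot.
From mathcomp Require Import zify.

Lemma closure G : is_gapset G -> forall x y, 0 < x -> 0 < y ->
  x \notin G -> y \notin G -> x + y \notin G.
Proof.
case=> _ H x y hx hy nx ny; apply/negP=> hxy.
by move: (H x y hx hy hxy); rewrite (negbTE nx) (negbTE ny).
Qed.

Lemma max_in (s : seq nat) : s != [::] -> \max_(x <- s) x \in s.
Proof.
elim: s => [//|y s IH] _; rewrite big_cons.
case: s IH => [|z s] IH; first by rewrite big_nil maxn0 mem_seq1.
have /IH H : z :: s != [::] by [].
set M := \max_(x <- z :: s) x in H *. rewrite /maxn; case: (ltnP y M) => h.
  by rewrite in_cons H orbT.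
by rewrite mem_head.
Qed.

Lemma genus_count G F : (forall x, x \in G -> 0 < x <= F) ->
  genus G = count (mem G) (iota 1 F).
Proof.
move=> HG; rewrite /genus -size_filter; apply: perm_size.
apply: uniq_perm; first exact: undup_uniq.
  by apply: filter_uniq; exact: iota_uniq.
move=> x; rewrite mem_undup mem_filter mem_iota /=.
case hx: (x \in G) => //=; move: (HG x hx); lia.
Qed.

Lemma count2_ge (p q : pred nat) s : (forall x, x \in s -> p x || q x) ->
  size s <= count p s + count q s.
Proof.
elim: s => [//|y s IH] H /=.
have := H y (mem_head _ _); have := IH (fun x hx => H x ltac:(by rewrite in_cons hx orbT)).
case: (p y); case: (q y) => //= ; lia.
Qed.

Lemma count2_gt (p q : pred nat) s x0 : (forall x, x \in s -> p x || q x) ->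
  x0 \in s -> p x0 -> q x0 -> size s < count p s + count q s.
Proof.
elim: s => [//|y s IH] H /=; rewrite in_cons => /orP [/eqP -> | hx0] hp hq.
  have := @count2_ge p q s (fun x hx => H x ltac:(by rewrite in_cons hx orbT)).
  rewrite hp hq /=; lia.
have := IH (fun x hx => H x ltac:(by rewrite in_cons hx orbT)) hx0 hp hq.
have := H y (mem_head _ _).
case: (p y); case: (q y) => //= ; lia.
Qed.

Lemma sym G k : is_gapset G -> (forall x, x \in G -> 0 < x <= k.*2.+1) ->
  genus G = k.+1 -> k.*2.+1 \in G ->
  forall x, 0 < x < k.*2.+1 -> x \in G -> k.*2.+1 - x \notin G.
Proof.
move=> HG Hle Hg HF x hx hxG; apply/negP => hyG.
have := @genus_count G k.*2.+1 Hle; rewrite Hg -[k.*2.+1]addn1 iotaD count_cat /= HF /= => Hc.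
set s := iota 1 k.*2 in Hc.
have Hperm : perm_eq (map (fun y => k.*2.+1 - y) s) s.
  apply: uniq_perm.
  - rewrite map_inj_in_uniq ?iota_uniq // => a b; rewrite !mem_iota; lia.
  - exact: iota_uniq.
  move=> y; apply/mapP/idP.
    by case=> z; rewrite !mem_iota => hz ->; lia.
  rewrite mem_iota => hy; exists (k.*2.+1 - y); rewrite ?mem_iota; lia.
have Hq : count (fun y => k.*2.+1 - y \in G) s = count (mem G) s.
  by rewrite -(count_map (fun y => k.*2.+1 - y) (mem G)); apply/permP.
have := @count2_gt (mem G) (fun y => k.*2.+1 - y \in G) s x.
rewrite Hq size_iota.
have H1 : forall y, y \in s -> (y \in G) || (k.*2.+1 - y \in G).
  move=> y; rewrite mem_iota => hy.
  case: HG => _ HG; apply: HG; try lia.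
  by have -> : y + (k.*2.+1 - y) = k.*2.+1 by lia.
move=> /(_ H1); rewrite mem_iota => H; have hx2 : 0 < x < 1 + k.*2 by rewrite -!muln2 in hx *; lia.
have := H hx2 hxG hyG; rewrite -!muln2 in Hc *; set c := count _ s in Hc *; lia.
Qed.

Lemma head_filter_iota (P : pred nat) k a : has P (iota a k) ->
  let h := head 0 (filter P (iota a k)) in
  [/\ P h, a <= h < a + k & forall j, a <= j < h -> ~~ P j].
Proof.
elim: k a => [//|k IH] a /=.
case hPa: (P a) => /=.
  move=> _; split => //; first lia; move=> j; lia.
move=> /IH [h1 h2 h3]; split => //; first lia.
move=> j hj; case: (ltnP a j) => haj; first by apply: h3; lia.
have -> : j = a by lia.
by rewrite hPa.
Qed.

Theorem mainTheorem10 (n : nat) (G : seq nat) :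
  0 < n ->
  is_gapset G ->
  symmetric_gapset G ->
  pure_sparse (2 * n) G ->
  genus G = 3 * n + 1 ->
  (multiplicity G).+1 \in G.
Proof.
move=> hn HG Hsym [Hsp1 [i0 [Hi0 Hi0e]]] Hg.
rewrite /symmetric_gapset Hg in Hsym.
set F := frobenius G in Hsym.
have HGne : G != [::] by apply/eqP => E; move: Hg; rewrite /genus E /=; lia.
have HF : F \in G by apply: max_in.
have Hle : forall x, x \in G -> 0 < x <= F.
  move=> x hx; rewrite (proj1 HG x hx) /=.
  exact: (@leq_bigmax_seq _ _ xpredT (fun x => x) x hx).
have HF' : F = (3 * n).*2.+1 by rewrite Hsym; lia.
have Hsy : forall x, 0 < x < F -> x \in G -> F - x \notin G.
  rewrite HF'; apply: sym => //; [by rewrite -HF' | by rewrite Hg; lia | by rewrite -HF'].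
have Hcl := @closure G HG.
have Hhas : has (fun s => s \notin G) (iota 1 (size (undup G)).+1).
  apply/negPn/negP => /hasPn Hall.
  have : size (iota 1 (size (undup G)).+1) <= size (undup G).
    apply: uniq_leq_size; first exact: iota_uniq.
    by move=> x /Hall; rewrite negbK mem_undup.
  by rewrite size_iota ltnn.
have [Hm1 Hm2 Hm3] := @head_filter_iota _ _ _ Hhas.
rewrite /multiplicity.
set m := head 0 _ in Hm1 Hm2 Hm3 *.
have {}Hm1 : m \notin G := Hm1.
apply/negPn/negP => Hm1'.
set l := gapseq G in Hsp1 Hi0 Hi0e.
have Hlmem : forall x, (x \in l) = (x \in G) by move=> x; rewrite mem_sort mem_undup.
have Hlsz : size l = 3 * n + 1 by rewrite size_sort.
have Hlle : sorted leq l by apply: sort_sorted; exact: leq_total.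
have Hllt : sorted ltn l by rewrite ltn_sorted_uniq_leq Hlle sort_uniq undup_uniq.
have Hlt : forall i j, i < j -> j < size l -> nth 0 l i < nth 0 l j.
  move=> i j hij hj; apply: (sorted_ltn_nth ltn_trans) => //; rewrite inE; lia.
have Hleq : forall i j, i <= j -> j < size l -> nth 0 l i <= nth 0 l j.
  move=> i j hij hj; apply: (sorted_leq_nth leq_trans leqnn) => //; rewrite inE; lia.
have Hbetw : forall i x, i.+1 < size l -> nth 0 l i < x < nth 0 l i.+1 -> x \notin G.
  move=> i x hi hx; rewrite -Hlmem; apply/negP => hxl.
  have hj : index x l < size l by rewrite index_mem.
  have ex : nth 0 l (index x l) = x by apply: nth_index.
  case: (leqP (index x l) i) => hji.
    have := Hleq _ _ hji ltac:(lia); lia.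
  have := Hleq i.+1 (index x l) hji hj; lia.
have HnthG : forall i, i < size l -> nth 0 l i \in G by move=> i hi; rewrite -Hlmem mem_nth.
have Hlast : nth 0 l (3 * n) = F.
  have hFl : F \in l by rewrite Hlmem.
  have hj : index F l < size l by rewrite index_mem.
  have ex : nth 0 l (index F l) = F by apply: nth_index.
  have := Hleq (index F l) (3 * n) ltac:(lia) ltac:(lia).
  have := Hle _ (HnthG (3 * n) ltac:(lia)); lia.
have Hm_le : m <= 2 * n.
  have := Hsp1 (3 * n).-1 ltac:(lia).
  have -> : (3 * n).-1.+1 = 3 * n by lia.
  rewrite Hlast => hd.
  have ha := HnthG (3 * n).-1 ltac:(lia).
  have hal := Hlt (3 * n).-1 (3 * n) ltac:(lia) ltac:(lia).
  rewrite Hlast in hal.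
  case: (leqP m (2 * n)) => // hm.
  set a := nth 0 l (3 * n).-1 in hd ha hal.
  have hk : F - a \in G.
    case: (boolP (F - a \in G)) => // hk.
    by move: (Hm3 (F - a) ltac:(lia)) => /=; rewrite hk.
  have := Hsy (F - a) ltac:(lia) hk.
  rewrite (_ : F - (F - a) = a); [by rewrite ha | lia].
have Hm_ge : 2 * n <= m.
  case: (leqP (2 * n) m) => // hm.
  have hab := Hlt i0 i0.+1 (ltnSn _) Hi0.
  have hb := HnthG i0.+1 Hi0.
  have hc := Hbetw i0 (nth 0 l i0.+1 - m) Hi0 ltac:(lia).
  have := Hcl (nth 0 l i0.+1 - m) m ltac:(lia) ltac:(lia) hc Hm1.
  rewrite (_ : nth 0 l i0.+1 - m + m = nth 0 l i0.+1); [by rewrite hb | lia].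
have h2 := Hcl m m.+1 ltac:(lia) ltac:(lia) Hm1 Hm1'.
have h3 := Hcl m (m + m.+1) ltac:(lia) ltac:(lia) Hm1 h2.
have : m + (m + m.+1) = F by lia.
by move=> E; rewrite E HF in h3.
Qed.
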